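(* In the setting (R), fix $x\in\mathbb{R}^n$ and let $(\lambda_k)_k,(\mu_k)_k\subset(0,+\infty)$ converge to $0$ with $\lim_{k\to\infty}\lambda_k/\mu_k=c\in(0,+\infty)$. Let $u_k=u_{\lambda_k,\mu_k}$ and $p_k=\nabla S_{\lambda_k,\mu_k}(x)$. Then $$\lim_{k\to\infty}u_k=\arg\min_{u\in U(x)}\|u\|_2\qquad\text{and}\qquad\lim_{k\to\infty}p_k=\arg\min_{p\in\partial S(x)}\|p\|_2,$$ i.e. $u_k$ and $p_k$ converge to the Euclidean projections of $0$ onto $U(x)$ and $\partial S(x)$, respectively.
   Context: Setting (R): Let $F_1=\|\cdot\|$ and $F_2=|||\cdot|||$ be two norms on $\mathbb{R}^n$, with dual norms $\|\cdot\|_*$ and $|||\cdot|||_*$, so that $F_2^*(y)=I\{|||y|||_*\le1\}$ (indicator: $0$ if $|||y|||_*\le1$, $+\infty$ otherwise). For $x\in\mathbb{R}^n$ define $S(x)=\min_{u\in\mathbb{R}^n}F_1(u)+F_2^*(x-u)$ and $U(x)=\arg\min_{u\in\mathbb{R}^n}F_1(u)+F_2^*(x-u)$ (a nonempty closed convex set). For $\lambda,\mu>0$, problem (P) is $$\min_{v,w\in\mathbb{R}^n}\ F_1(v)+\frac{\lambda}{2}\|v\|_2^2+F_2^*(w)+\frac{1}{2\mu}\|x-v-w\|_2^2,$$ which has a unique minimizer denoted $(v_{\lambda,\mu},w_{\lambda,\mu})$; its minimal value, as a function of $x$, is denoted $S_{\lambda,\mu}(x)$, which is differentiable in $x$; set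 $u_{\lambda,\mu}=x-w_{\lambda,\mu}$. $\partial$ denotes the convex subdifferential. *)

(* Defs.v *)
From mathcomp Require Import all_boot.
From Stdlib Require Import Reals ClassicalEpsilon.
Open Scope R_scope.

Definition vec (n : nat) := 'I_n -> R.

Definition vadd {n} (u v : vec n) : vec n := fun i => u i + v i.
Definition vsub {n} (u v : vec n) : vec n := fun i => u i - v i.
Definition vscale {n} (a : R) (u : vec n) : vec n := fun i => a * u i.
Definition vzero {n} : vec n := fun _ => 0.

Definition dot {n} (u v : vec n) : R := \big[Rplus/0]_(i < n) (u i * v i).
Definition norm2 {n} (u : vec n) : R := sqrt (dot u u).

Definition is_norm {n} (N : vec n -> R) : Prop :=
  (forall v, 0 <= N v) /\
  (forall v, N v = 0 -> v = vzero) /\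
  (forall a v, N (vscale a v) = Rabs a * N v) /\
  (forall u v, N (vadd u v) <= N u + N v).

(* |||y|||_* <= 1, where |||y|||_* = sup { <z,y> : |||z||| <= 1 } is the dual
   norm of N2; dom F2^* is this dual unit ball (F2^* is its indicator). *)
Definition dual_ball {n} (N2 : vec n -> R) (y : vec n) : Prop :=
  forall z, N2 z <= 1 -> dot z y <= 1.

Definition is_glb (P : R -> Prop) (s : R) : Prop :=
  (forall t, P t -> s <= t) /\ (forall b, (forall t, P t -> b <= t) -> b <= s).
Definition inf_of (P : R -> Prop) : R := epsilon (inhabits 0) (fun s => is_glb P s).

(* S(x) = min_u F1(u) + F2^*(x-u) *)
Definition S_fun {n} (N1 N2 : vec n -> R) (x : vec n) : R :=
  inf_of (fun t => exists u, dual_ball N2 (vsub x u) /\ t = N1 u).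

(* U(x) = argmin_u F1(u) + F2^*(x-u) *)
Definition in_U {n} (N1 N2 : vec n -> R) (x u : vec n) : Prop :=
  dual_ball N2 (vsub x u) /\
  (forall u', dual_ball N2 (vsub x u') -> N1 u <= N1 u').

Definition in_subdiff_S {n} (N1 N2 : vec n -> R) (x p : vec n) : Prop :=
  forall y, S_fun N1 N2 x + dot p (vsub y x) <= S_fun N1 N2 y.

(* objective of (P) restricted to dom F2^* (where F2^*(w) = 0) *)
Definition P_obj {n} (N1 : vec n -> R) (lam mu : R) (x v w : vec n) : R :=
  N1 v + lam / 2 * norm2 v ^ 2 + / (2 * mu) * norm2 (vsub (vsub x v) w) ^ 2.

Definition P_minimizer {n} (N1 N2 : vec n -> R) (lam mu : R) (x v w : vec n) : Prop :=
  dual_ball N2 w /\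
  (forall v' w', dual_ball N2 w' -> P_obj N1 lam mu x v w <= P_obj N1 lam mu x v' w').

Definition S_lm {n} (N1 N2 : vec n -> R) (lam mu : R) (x : vec n) : R :=
  inf_of (fun t => exists v w, dual_ball N2 w /\ t = P_obj N1 lam mu x v w).

Definition is_gradient {n} (f : vec n -> R) (x p : vec n) : Prop :=
  forall eps, 0 < eps -> exists delta, 0 < delta /\
    forall h, norm2 h < delta ->
      Rabs (f (vadd x h) - f x - dot p h) <= eps * norm2 h.

Definition vconv {n} (s : nat -> vec n) (l : vec n) : Prop :=
  forall eps, 0 < eps -> exists N, forall k, (N <= k)%nat -> norm2 (vsub (s k) l) < eps.

(* Main.v *)
Require Import Defs.
From HB Require Import structures.
From mathcomp Require Import all_boot.
From Stdlib Require Import Reals ZArith Lra Psatz FunctionalExtensionality ClassicalEpsilon Classical.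
Open Scope R_scope.

Lemma Rplus_assoc' : associative Rplus.
Proof. move=> a b c; ring. Qed.
HB.instance Definition _ := Monoid.isComLaw.Build R 0 Rplus Rplus_assoc' Rplus_comm Rplus_0_l.

Lemma sum_scal (m : nat) a (F : 'I_m -> R) :
  \big[Rplus/0]_(i < m) (a * F i) = a * \big[Rplus/0]_(i < m) F i.
Proof.
apply: (big_rec2 (fun y1 y2 => y1 = a * y2)) => [|i y1 y2 _ ->]; ring.
Qed.

Lemma sum_le (m : nat) (F G : 'I_m -> R) :
  (forall i, F i <= G i) -> \big[Rplus/0]_(i < m) F i <= \big[Rplus/0]_(i < m) G i.
Proof.
move=> H; apply: (big_rec2 (fun y1 y2 => y1 <= y2)) => [|i y1 y2 _ Hy]; first lra.
have := H i; lra.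
Qed.

Lemma sum_ge0 (m : nat) (F : 'I_m -> R) :
  (forall i, 0 <= F i) -> 0 <= \big[Rplus/0]_(i < m) F i.
Proof.
move=> H; apply: (big_ind (fun y => 0 <= y)) => //; [lra | move=> a b; lra].
Qed.

Section V.
Variable n : nat.
Implicit Types u v z : vec n.

Lemma dot_sym u v : dot u v = dot v u.
Proof. rewrite /dot; apply: eq_bigr => i _; ring. Qed.

Lemma dot_addl u v z : dot (vadd u v) z = dot u z + dot v z.
Proof. rewrite /dot -big_split; apply: eq_bigr => i _ /=; rewrite /vadd; ring. Qed.

Lemma dot_scalel a u z : dot (vscale a u) z = a * dot u z.
Proof. rewrite /dot -sum_scal; apply: eq_bigr => i _ /=; rewrite /vscale; ring. Qed.

Lemma dot_subl u v z : dot (vsub u v) z = dot u z - dot v z.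
Proof.
have -> : vsub u v = vadd u (vscale (-1) v).
  by apply: functional_extensionality => i; rewrite /vsub /vadd /vscale; ring.
rewrite dot_addl dot_scalel; ring.
Qed.

Lemma dot_addr u v z : dot z (vadd u v) = dot z u + dot z v.
Proof. by rewrite dot_sym dot_addl (dot_sym u) (dot_sym v). Qed.
Lemma dot_subr u v z : dot z (vsub u v) = dot z u - dot z v.
Proof. by rewrite dot_sym dot_subl (dot_sym u) (dot_sym v). Qed.
Lemma dot_scaler a u z : dot z (vscale a u) = a * dot z u.
Proof. by rewrite dot_sym dot_scalel (dot_sym u). Qed.
Lemma dot_zerol z : dot vzero z = 0.
Proof. have -> : (vzero : vec n) = vscale 0 vzero by apply: functional_extensionality => i; rewrite /vscale /vzero; ring.
rewrite dot_scalel; ring. Qed.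
Lemma dot_zeror z : dot z vzero = 0.
Proof. by rewrite dot_sym dot_zerol. Qed.

Lemma dot_ge0 u : 0 <= dot u u.
Proof. apply: sum_ge0 => i; nra. Qed.

Lemma norm2_ge0 u : 0 <= norm2 u.
Proof. apply: sqrt_pos. Qed.

Lemma norm2_sq u : norm2 u ^ 2 = dot u u.
Proof. rewrite /norm2 /= Rmult_1_r sqrt_sqrt //; apply: dot_ge0. Qed.

Lemma norm2_sq' u : norm2 u * norm2 u = dot u u.
Proof. rewrite /norm2 sqrt_sqrt //; apply: dot_ge0. Qed.

Lemma CS_sq u v : dot u v * dot u v <= dot u u * dot v v.
Proof.
have Q : forall t, 0 <= dot u u - 2 * t * dot u v + t * t * dot v v.
  move=> t; have := dot_ge0 (vsub u (vscale t v)).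
  rewrite !dot_subl !dot_subr !dot_scalel !dot_scaler (dot_sym v u); lra.
have Hu := dot_ge0 u; have Hv := dot_ge0 v.
case: (Req_dec (dot v v) 0) => Hv0.
- case: (Req_dec (dot u v) 0) => Hb; first by rewrite Hb Hv0; lra.
  have := Q ((dot u u + 1) / (2 * dot u v)). rewrite Hv0.
  have -> : 2 * ((dot u u + 1) / (2 * dot u v)) * dot u v = dot u u + 1 by field.
  lra.
- have := Q (dot u v / dot v v).
  have -> : dot u v / dot v v * (dot u v / dot v v) * dot v v = dot u v * dot u v / dot v v by field.
  move=> H.
  have Hpos : 0 < dot v v by lra.
  have : 0 <= (dot u u - 2 * (dot u v / dot v v) * dot u v + dot u v * dot u v / dot v v) * dot v v
    by apply: Rmult_le_pos; lra.
  have -> : (dot u u - 2 * (dot u v / dot v v) * dot u v + dot u v * dot u v / dot v v) * dot v v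
     = dot u u * dot v v - dot u v * dot u v by field.
  lra.
Qed.

Lemma CS u v : Rabs (dot u v) <= norm2 u * norm2 v.
Proof.
have H1 := norm2_ge0 u; have H2 := norm2_ge0 v.
have H := CS_sq u v.
have E : dot u u * dot v v = (norm2 u * norm2 v) * (norm2 u * norm2 v).
  rewrite -norm2_sq' -(norm2_sq' v); ring.
rewrite E in H; have H3 : 0 <= norm2 u * norm2 v by apply: Rmult_le_pos.
apply: Rabs_le; split; nra.
Qed.

Lemma CS' u v : dot u v <= norm2 u * norm2 v.
Proof. have := CS u v; have := Rle_abs (dot u v); lra. Qed.

Lemma norm2_eq0 u : norm2 u = 0 -> dot u u = 0.
Proof. by move=> H; rewrite -norm2_sq' H; ring. Qed.

Lemma coord_sq u i : u i * u i <= dot u u.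
Proof.
rewrite /dot (bigD1 i) //=.
rewrite -{1}(Rplus_0_r (u i * u i)); apply: Rplus_le_compat_l.
apply: (big_ind (fun y => 0 <= y)) => //; [lra | move=> a b; lra | move=> j _; nra].
Qed.

Lemma coord_le u i : Rabs (u i) <= norm2 u.
Proof.
have H := coord_sq u i; rewrite -norm2_sq' in H; have := norm2_ge0 u.
move=> H0; apply: Rabs_le; split; nra.
Qed.

Lemma dot0_vzero u : dot u u = 0 -> u = vzero.
Proof.
move=> H; apply: functional_extensionality => i; have := coord_sq u i; rewrite H /vzero; nra.
Qed.

Lemma norm2_triangle u v : norm2 (vadd u v) <= norm2 u + norm2 v.
Proof.
have H1 := norm2_ge0 u; have H2 := norm2_ge0 v; have H3 := norm2_ge0 (vadd u v).
have E : norm2 (vadd u v) * norm2 (vadd u v) = norm2 u * norm2 u + 2 * dot u v + norm2 v * norm2 v.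
  rewrite !norm2_sq' dot_addl !dot_addr (dot_sym v u); ring.
have := CS' u v; nra.
Qed.

Lemma norm2_scale a u : norm2 (vscale a u) = Rabs a * norm2 u.
Proof.
rewrite /norm2 dot_scalel dot_scaler -Rmult_assoc sqrt_mult.
- by rewrite -sqrt_Rsqr_abs.
- apply: Rle_0_sqr.
- apply: dot_ge0.
Qed.


End V.
Arguments dot_sym {n}. Arguments dot_addl {n}. Arguments dot_scalel {n}. Arguments dot_subl {n}. Arguments dot_addr {n}. Arguments dot_subr {n}. Arguments dot_scaler {n}. Arguments dot_zerol {n}. Arguments dot_zeror {n}. Arguments dot_ge0 {n}. Arguments norm2_ge0 {n}. Arguments norm2_sq {n}. Arguments norm2_sq' {n}. Arguments CS_sq {n}. Arguments CS {n}. Arguments CS' {n}. Arguments norm2_eq0 {n}. Arguments coord_sq {n}. Arguments coord_le {n}. Arguments dot0_vzero {n}. Arguments norm2_triangle {n}. Arguments norm2_scale {n}.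

Section B.
Variable n : nat.
Implicit Types u v z : vec n.

Lemma sum_sq_le (m : nat) (F : 'I_m -> R) :
  \big[Rplus/0]_(i < m) (F i * F i) <= \big[Rplus/0]_(i < m) Rabs (F i) * \big[Rplus/0]_(i < m) Rabs (F i)
  /\ 0 <= \big[Rplus/0]_(i < m) Rabs (F i).
Proof.
apply: (big_rec2 (fun y1 y2 => y1 <= y2 * y2 /\ 0 <= y2)) => [|i y1 y2 _ [H1 H2]]; first lra.
have := Rabs_pos (F i); have E : F i * F i = Rabs (F i) * Rabs (F i).
  by rewrite -Rabs_mult Rabs_pos_eq //; nra.
split; nra.
Qed.

Lemma norm2_le_sum u : norm2 u <= \big[Rplus/0]_(i < n) Rabs (u i).
Proof.
have [H1 H2] := @sum_sq_le n u.
rewrite /norm2 /dot; rewrite -(sqrt_square (\big[Rplus/0]_(i < n) Rabs (u i))) //.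
apply: sqrt_le_1_alt; exact: H1.
Qed.

Lemma sum_const (m : nat) c : \big[Rplus/0]_(i < m) c = INR m * c.
Proof.
elim: m => [|m IH]; first by rewrite big_ord0 /=; ring.
by rewrite big_ord_recr IH S_INR /=; ring.
Qed.

Lemma vconv_coord (s : nat -> vec n) (l : vec n) :
  (forall i, Un_cv (fun k => s k i) (l i)) -> vconv s l.
Proof.
move=> H eps Heps.
have Hn : 0 < INR n + 1 by have := pos_INR n; lra.
set e := eps / (INR n + 1).
have He : 0 < e by apply: Rdiv_lt_0_compat.
pose P i N := forall k, (k >= N)%coq_nat -> R_dist (s k i) (l i) < e.
pose Nf i := epsilon (inhabits 0%nat) (P i).
have HNf : forall i, P i (Nf i).
  move=> i; apply: (epsilon_spec (inhabits 0%nat) (P i)); exact: (H i e He).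
exists (\max_(i < n) Nf i)%N => k Hk.
apply: (Rle_lt_trans _ _ _ (norm2_le_sum _)).
apply: (Rle_lt_trans _ (\big[Rplus/0]_(i < n) e)).
  apply: sum_le => i; apply: Rlt_le; apply: HNf.
  apply/leP; apply: leq_trans Hk; exact: leq_bigmax.
rewrite sum_const /e.
have -> : INR n * (eps / (INR n + 1)) = eps * (INR n / (INR n + 1)) by field; lra.
have : INR n / (INR n + 1) < 1.
  apply: (Rmult_lt_reg_r (INR n + 1)) => //.
  rewrite /Rdiv Rmult_assoc Rinv_l; lra.
nra.
Qed.

End B.
Arguments norm2_le_sum {n}. Arguments vconv_coord {n}.

Section C.
Variable n : nat.
Variable N : vec n -> R.
Hypothesis hN : is_norm N.

Lemma N_ge0 v : 0 <= N v.
Proof. by case: hN. Qed.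
Lemma N_scale a v : N (vscale a v) = Rabs a * N v.
Proof. by case: hN => _ [_ [H _]]. Qed.
Lemma N_tri u v : N (vadd u v) <= N u + N v.
Proof. by case: hN => _ [_ [_ H]]. Qed.
Lemma N_zero : N vzero = 0.
Proof.
have -> : (vzero : vec n) = vscale 0 vzero by apply: functional_extensionality => i; rewrite /vscale /vzero; ring.
rewrite N_scale Rabs_R0; ring.
Qed.
Lemma N_opp v : N (vscale (-1) v) = N v.
Proof. rewrite N_scale Rabs_Ropp Rabs_R1; ring. Qed.
Lemma N_sub u v : N u <= N v + N (vsub u v).
Proof.
have -> : u = vadd v (vsub u v) by apply: functional_extensionality => i; rewrite /vadd /vsub; ring.
have -> : vsub (vadd v (vsub u v)) v = vsub u v by apply: functional_extensionality => i; rewrite /vadd /vsub; ring.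
apply: N_tri.
Qed.
Lemma N_sub_sym u v : N (vsub u v) = N (vsub v u).
Proof.
have -> : vsub u v = vscale (-1) (vsub v u) by apply: functional_extensionality => i; rewrite /vscale /vsub; ring.
by rewrite N_opp.
Qed.

Definition vsum {m : nat} (F : 'I_m -> vec n) : vec n := fun j => \big[Rplus/0]_(i < m) F i j.

Lemma N_vsum (m : nat) (F : 'I_m -> vec n) : N (vsum F) <= \big[Rplus/0]_(i < m) N (F i).
Proof.
elim: m F => [|m IH] F.
  have -> : vsum F = vzero by apply: functional_extensionality => j; rewrite /vsum big_ord0.
  rewrite N_zero big_ord0; lra.
have -> : vsum F = vadd (vsum (fun i => F (widen_ord (leqnSn m) i))) (F ord_max).
  by apply: functional_extensionality => j; rewrite /vsum /vadd big_ord_recr.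
rewrite big_ord_recr /=.
apply: (Rle_trans _ _ _ (N_tri _ _)); apply: Rplus_le_compat_r; apply: IH.
Qed.

Definition ebase (i : 'I_n) : vec n := fun j => if j == i then 1 else 0.
Definition Lip := \big[Rplus/0]_(i < n) N (ebase i).

Lemma Lip_ge0 : 0 <= Lip.
Proof. apply: sum_ge0 => i; apply: N_ge0. Qed.

Lemma N_le_Lip v : N v <= Lip * norm2 v.
Proof.
have E : v = vsum (fun i => vscale (v i) (ebase i)).
  apply: functional_extensionality => j; rewrite /vsum /vscale /ebase (bigD1 j) //= eqxx.
  rewrite big1; first ring.
  by move=> i /negbTE; rewrite eq_sym => ->; ring.
rewrite {1}E.
apply: (Rle_trans _ _ _ (N_vsum _ _)).
rewrite /Lip Rmult_comm -sum_scal.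
apply: sum_le => i; rewrite N_scale; apply: Rmult_le_compat_r; first by apply: N_ge0.
exact: coord_le.
Qed.

Lemma N_lip u v : Rabs (N u - N v) <= Lip * norm2 (vsub u v).
Proof.
have H1 := N_sub u v; have H2 := N_sub v u; rewrite N_sub_sym in H2.
have := N_le_Lip (vsub u v); move=> H3.
apply: Rabs_le; split; lra.
Qed.
End C.
Arguments Lip {n} N.
Arguments N_ge0 {n N}. Arguments N_scale {n N}. Arguments N_tri {n N}. Arguments N_zero {n N}.
Arguments N_opp {n N}. Arguments N_sub {n N}. Arguments N_sub_sym {n N}.
Arguments Lip_ge0 {n N}. Arguments N_le_Lip {n N}. Arguments N_lip {n N}.

Definition incr (phi : nat -> nat) := forall k, (phi k < phi (S k))%coq_nat.

Lemma incr_ge phi : incr phi -> forall k, (k <= phi k)%coq_nat.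
Proof. move=> H; elim=> [|k IH]; first lia. have := H k; lia. Qed.

Lemma incr_comp phi psi : incr phi -> incr psi -> incr (fun k => phi (psi k)).
Proof.
move=> Hp Hq k.
have mono : forall a b, (a < b)%coq_nat -> (phi a < phi b)%coq_nat.
  move=> a b; elim: b => [|b IH] Hab; first lia.
  case: (Nat.eq_dec a b) => [->|Hne]; first exact: Hp.
  have := Hp b; have := IH ltac:(lia); lia.
exact: mono (Hq k).
Qed.

Lemma Un_cv_sub (s : nat -> R) l phi : incr phi -> Un_cv s l -> Un_cv (fun k => s (phi k)) l.
Proof.
move=> Hp H eps He; case: (H eps He) => N HN; exists N => k Hk.
apply: HN; have := incr_ge _ Hp k; lia.
Qed.

Lemma vconv_sub n (s : nat -> vec n) l phi : incr phi -> vconv s l -> vconv (fun k => s (phi k)) l.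
Proof.
move=> Hp H eps He; case: (H eps He) => N HN; exists N => k Hk.
apply: HN; apply/leP; have := incr_ge _ Hp k; move/leP: Hk; lia.
Qed.

Fixpoint build (f : nat -> nat -> nat) (k : nat) : nat :=
  match k with 0 => f 0%nat 0%nat | S k' => f (S (build f k')) (S k') end.

Lemma BW1 (s : nat -> R) M : (forall k, Rabs (s k) <= M) ->
  exists phi l, incr phi /\ Un_cv (fun k => s (phi k)) l.
Proof.
move=> HM.
have [l Hl] : exists l, ValAdh s l.
  apply: (Bolzano_Weierstrass s (fun c => -M <= c <= M)); first exact: compact_P3.
  move=> k; have := HM k; have := Rle_abs (s k); have := Rle_abs (- s k); rewrite Rabs_Ropp; lra.
have Hex : forall N k, exists p, (N <= p)%coq_nat /\ Rabs (s p - l) < / (INR k + 1).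
  move=> N k.
  have Hp : 0 < / (INR k + 1) by apply: Rinv_0_lt_compat; have := pos_INR k; lra.
  have Hnb : neighbourhood (disc l (mkposreal _ Hp)) l by exists (mkposreal _ Hp) => y; exact.
  have [p [H1 H2]] := Hl _ N Hnb.
  by exists p.
pose f N k := epsilon (inhabits 0%nat) (fun p => (N <= p)%coq_nat /\ Rabs (s p - l) < / (INR k + 1)).
have Hf : forall N k, (N <= f N k)%coq_nat /\ Rabs (s (f N k) - l) < / (INR k + 1).
  move=> N k; exact: (epsilon_spec (inhabits 0%nat) _ (Hex N k)).
exists (build f), l; split.
  by move=> k /=; have [H _] := Hf (S (build f k)) (S k); lia.
move=> eps He.
have [K HK] : exists K : nat, / (INR K + 1) < eps.
  have [Hz1 Hz2] := archimed (/ eps); set z := up (/ eps) in Hz1 Hz2.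
  have Hz : (0 <= z)%Z.
    apply: le_IZR; have : 0 < / eps by apply: Rinv_0_lt_compat.
    lra.
  exists (Z.to_nat z).
  rewrite INR_IZR_INZ Z2Nat.id //.
  have H0 : 0 < / eps by apply: Rinv_0_lt_compat.
  rewrite -(Rinv_inv eps).
  apply: Rinv_lt_contravar; first nra.
  lra.
exists K => k Hk.
have Hb : Rabs (s (build f k) - l) < / (INR k + 1).
  case: k {Hk} => [|k]; [exact: (proj2 (Hf 0%nat 0%nat)) | exact: (proj2 (Hf (S (build f k)) (S k)))].
rewrite /R_dist.
apply: (Rlt_le_trans _ _ _ Hb); apply: Rle_trans (Rlt_le _ _ HK).
apply: Rinv_le_contravar; first by have := pos_INR K; lra.
have := le_INR _ _ Hk; lra.
Qed.

Lemma BWn n (s : nat -> vec n) M : (forall k, norm2 (s k) <= M) ->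
  exists phi l, incr phi /\ vconv (fun k => s (phi k)) l.
Proof.
move=> HM.
have claim : forall m, (m <= n)%coq_nat -> exists phi, incr phi /\
    forall i : 'I_n, (nat_of_ord i < m)%coq_nat -> exists li, Un_cv (fun k => s (phi k) i) li.
  elim=> [|m IH] Hm.
    exists (fun k : nat => k); split; [move=> k; lia | move=> i Hi; lia].
  have [phi [Hphi Hc]] := IH ltac:(lia).
  have Hmn : leq m.+1 n by apply/ltP; lia.
  pose i0 := Ordinal Hmn.
  have Hb : forall k, Rabs (s (phi k) i0) <= M.
    move=> k; apply: (Rle_trans _ _ _ (coord_le _ _) (HM _)).
  have [psi [l0 [Hpsi Hl0]]] := BW1 _ _ Hb.
  exists (fun k => phi (psi k)); split; first exact: incr_comp.
  move=> i Hi.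
  case: (Nat.eq_dec (nat_of_ord i) m) => Him.
    have -> : i = i0 by apply: val_inj.
    by exists l0.
  have [li Hli] := Hc i ltac:(lia).
  exists li; exact: (Un_cv_sub (fun k => s (phi k) i) li psi Hpsi Hli).
have [phi [Hphi Hc]] := claim n (le_n n).
pose l i := epsilon (inhabits 0) (fun li => Un_cv (fun k => s (phi k) i) li).
exists phi, l; split => //.
apply: vconv_coord => i.
apply: (epsilon_spec (inhabits 0) (fun li => Un_cv (fun k => s (phi k) i) li)).
apply: Hc; apply/ltP; exact: ltn_ord.
Qed.

Lemma glb_exists (P : R -> Prop) t0 : P t0 -> (forall t, P t -> 0 <= t) -> exists s, is_glb P s.
Proof.
move=> H0 Hlb.
have Hb : bound (fun y => P (- y)).
  exists 0 => y Hy; have := Hlb _ Hy; lra.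
have He : exists y, P (- y) by exists (- t0); rewrite Ropp_involutive.
have [m [Hm1 Hm2]] := completeness _ Hb He.
exists (- m); split.
  move=> t Ht; have : t <= - - t by lra. move=> _.
  have := Hm1 (- t); rewrite Ropp_involutive => H; have := H Ht; lra.
move=> b Hb'.
have : m <= - b.
  apply: Hm2 => y Hy; have := Hb' _ Hy; lra.
lra.
Qed.

Lemma inf_of_spec P : (exists s, is_glb P s) -> is_glb P (inf_of P).
Proof. move=> H; exact: (epsilon_spec (inhabits 0) (fun s => is_glb P s) H). Qed.

Lemma glb_unique P s1 s2 : is_glb P s1 -> is_glb P s2 -> s1 = s2.
Proof. move=> [H1 H2] [H3 H4]; have := H2 _ H3; have := H4 _ H1; lra. Qed.

Lemma inf_of_min P t : P t -> (forall t', P t' -> t <= t') -> inf_of P = t.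
Proof.
move=> Ht Hmin.
have G : is_glb P t by split; [exact: Hmin | move=> b Hb; exact: Hb].
apply: (glb_unique P); [apply: inf_of_spec; by exists t | exact: G].
Qed.

Lemma vconv_iff n (a : nat -> vec n) A :
  vconv a A <-> Un_cv (fun k => norm2 (vsub (a k) A)) 0.
Proof.
split.
- move=> H eps He; case: (H eps He) => N HN; exists N => k Hk.
  rewrite /R_dist Rminus_0_r Rabs_pos_eq; last exact: norm2_ge0.
  apply: HN; apply/leP; exact: Hk.
- move=> H eps He; case: (H eps He) => N HN; exists N => k Hk.
  have := HN k ltac:(apply/leP; exact: Hk).
  rewrite /R_dist Rminus_0_r Rabs_pos_eq //; exact: norm2_ge0.
Qed.

Lemma squeeze (s g : nat -> R) L : (forall k, Rabs (s k - L) <= g k) -> Un_cv g 0 -> Un_cv s L.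
Proof.
move=> H Hg eps He; case: (Hg eps He) => N HN; exists N => k Hk.
have := HN k Hk; rewrite /R_dist Rminus_0_r => H1.
have := H k; have := Rle_abs (g k); lra.
Qed.

Lemma vsqueeze n (a : nat -> vec n) A g : (forall k, norm2 (vsub (a k) A) <= g k) -> Un_cv g 0 -> vconv a A.
Proof.
move=> H Hg; apply/vconv_iff; apply: (squeeze _ g) => // k.
rewrite Rminus_0_r Rabs_pos_eq; [exact: H | exact: norm2_ge0].
Qed.

Lemma cv_const (a : R) : Un_cv (fun _ => a) a.
Proof. move=> eps He; exists 0%nat => k _; rewrite /R_dist Rminus_diag Rabs_R0; lra. Qed.

Lemma dot_cv n (a b : nat -> vec n) A B : vconv a A -> vconv b B ->
  Un_cv (fun k => dot (a k) (b k)) (dot A B).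
Proof.
move=> /vconv_iff Ha /vconv_iff Hb.
apply: (squeeze _ (fun k => norm2 (vsub (a k) A) * norm2 (vsub (b k) B)
   + norm2 (vsub (a k) A) * norm2 B + norm2 A * norm2 (vsub (b k) B))).
- move=> k.
  have E : dot (a k) (b k) - dot A B = dot (vsub (a k) A) (vsub (b k) B)
     + dot (vsub (a k) A) B + dot A (vsub (b k) B).
    rewrite !dot_subl !dot_subr; ring.
  rewrite E.
  apply: (Rle_trans _ _ _ (Rabs_triang _ _)).
  apply: Rplus_le_compat; last exact: CS.
  apply: (Rle_trans _ _ _ (Rabs_triang _ _)).
  apply: Rplus_le_compat; exact: CS.
- have -> : 0 = 0 * 0 + 0 * norm2 B + norm2 A * 0 by ring.
  apply: CV_plus; [apply: CV_plus|]; apply: CV_mult => //; exact: cv_const.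
Qed.

Lemma vconv_add n (a b : nat -> vec n) A B : vconv a A -> vconv b B ->
  vconv (fun k => vadd (a k) (b k)) (vadd A B).
Proof.
move=> /vconv_iff Ha /vconv_iff Hb.
apply: (vsqueeze _ _ _ (fun k => norm2 (vsub (a k) A) + norm2 (vsub (b k) B))).
- move=> k.
  have -> : vsub (vadd (a k) (b k)) (vadd A B) = vadd (vsub (a k) A) (vsub (b k) B).
    by apply: functional_extensionality => i; rewrite /vsub /vadd; ring.
  exact: norm2_triangle.
- have -> : 0 = 0 + 0 by ring. exact: CV_plus.
Qed.

Lemma vconv_scale n (t : nat -> R) (a : nat -> vec n) T A : Un_cv t T -> vconv a A ->
  vconv (fun k => vscale (t k) (a k)) (vscale T A).
Proof.
move=> Ht /vconv_iff Ha.
apply: (vsqueeze _ _ _ (fun k => Rabs (t k) * norm2 (vsub (a k) A) + Rabs (t k - T) * norm2 A)).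
- move=> k.
  have -> : vsub (vscale (t k) (a k)) (vscale T A) = vadd (vscale (t k) (vsub (a k) A)) (vscale (t k - T) A).
    by apply: functional_extensionality => i; rewrite /vsub /vadd /vscale; ring.
  apply: (Rle_trans _ _ _ (norm2_triangle _ _)); rewrite !norm2_scale; lra.
- have -> : 0 = Rabs T * 0 + Rabs (T - T) * norm2 A by rewrite Rminus_diag Rabs_R0; ring.
  apply: CV_plus; apply: CV_mult; try exact: cv_const.
  + exact: cv_cvabs.
  + exact: Ha.
  + apply: cv_cvabs; apply: CV_minus => //; exact: cv_const.
Qed.

Lemma vconv_sub' n (a b : nat -> vec n) A B : vconv a A -> vconv b B ->
  vconv (fun k => vsub (a k) (b k)) (vsub A B).
Proof.
move=> Ha Hb.
have E : forall u v : vec n, vsub u v = vadd u (vscale (-1) v).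
  by move=> u v; apply: functional_extensionality => i; rewrite /vsub /vadd /vscale; ring.
rewrite E; under [fun k => _]functional_extensionality => k do rewrite E.
apply: vconv_add => //; apply: vconv_scale => //; exact: cv_const.
Qed.

Lemma vconv_const n (A : vec n) : vconv (fun _ => A) A.
Proof.
apply: (vsqueeze _ _ _ (fun _ => 0)); last exact: cv_const.
move=> k; have -> : vsub A A = vzero by apply: functional_extensionality => i; rewrite /vsub /vzero; ring.
rewrite /norm2 dot_zerol sqrt_0; lra.
Qed.

Section Main.
Variables (n : nat) (N1 N2 : vec n -> R) (hN1 : is_norm N1) (hN2 : is_norm N2) (x : vec n).

Lemma dual_ball0 : dual_ball N2 vzero.
Proof. move=> z _; rewrite dot_zeror; lra. Qed.

Lemma S_set_glb y : exists s, is_glb (fun t => exists u, dual_ball N2 (vsub y u) /\ t = N1 u) s.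
Proof.
apply: (glb_exists _ (N1 y)).
  exists y; split => //.
  have -> : vsub y y = vzero by apply: functional_extensionality => i; rewrite /vsub /vzero; ring.
  exact: dual_ball0.
move=> t [u [_ ->]]; exact: N_ge0.
Qed.

Lemma S_le y u : dual_ball N2 (vsub y u) -> S_fun N1 N2 y <= N1 u.
Proof. move=> H; have [H1 _] := inf_of_spec _ (S_set_glb y); apply: H1; by exists u. Qed.

Lemma S_ge y b : (forall u, dual_ball N2 (vsub y u) -> b <= N1 u) -> b <= S_fun N1 N2 y.
Proof. move=> H; have [_ H2] := inf_of_spec _ (S_set_glb y); apply: H2 => t [u [Hu ->]]; exact: H. Qed.

Lemma S_eq u : in_U N1 N2 x u -> S_fun N1 N2 x = N1 u.
Proof.
move=> [H1 H2]; apply: Rle_antisym; first exact: S_le.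
apply: S_ge; exact: H2.
Qed.

Lemma U_props uu pp : in_U N1 N2 x uu -> in_subdiff_S N1 N2 x pp ->
  (forall w', dual_ball N2 w' -> dot pp (vsub w' (vsub x uu)) <= 0) /\
  (forall v', N1 uu + dot pp (vsub v' uu) <= N1 v').
Proof.
move=> HU Hp; have HS := S_eq _ HU; split.
- move=> w' Hw.
  have H := Hp (vadd w' uu).
  have H2 : S_fun N1 N2 (vadd w' uu) <= N1 uu.
    apply: S_le.
    have -> : vsub (vadd w' uu) uu = w' by apply: functional_extensionality => i; rewrite /vsub /vadd; ring.
    exact: Hw.
  have -> : vsub w' (vsub x uu) = vsub (vadd w' uu) x by apply: functional_extensionality => i; rewrite /vsub /vadd; ring.
  lra.
- move=> v'.
  have H := Hp (vadd (vsub x uu) v').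
  have H2 : S_fun N1 N2 (vadd (vsub x uu) v') <= N1 v'.
    apply: S_le.
    have -> : vsub (vadd (vsub x uu) v') v' = vsub x uu by apply: functional_extensionality => i; rewrite /vsub /vadd; ring.
    by case: HU.
  have E : vsub (vadd (vsub x uu) v') x = vsub v' uu by apply: functional_extensionality => i; rewrite /vsub /vadd; ring.
  rewrite E HS in H; lra.
Qed.

Lemma dual_bound w : dual_ball N2 w -> norm2 w <= Lip N2 + 1.
Proof.
move=> Hw.
have HL := Lip_ge0 hN2.
have Hn := norm2_ge0 w.
case: (Req_dec (norm2 w) 0) => H0; first lra.
have Hpos : 0 < norm2 w by lra.
set a := / ((Lip N2 + 1) * norm2 w).
have Ha : 0 < a by apply: Rinv_0_lt_compat; apply: Rmult_lt_0_compat; lra.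
have Hz : N2 (vscale a w) <= 1.
  rewrite (N_scale hN2) Rabs_pos_eq; last lra.
  have := N_le_Lip hN2 w => H.
  apply: (Rle_trans _ (a * (Lip N2 * norm2 w))); first by apply: Rmult_le_compat_l; lra.
  rewrite /a; apply: (Rmult_le_reg_l ((Lip N2 + 1) * norm2 w)); first nra.
  rewrite -Rmult_assoc Rinv_r; nra.
have := Hw _ Hz; rewrite dot_scalel -norm2_sq' /a => H.
have : norm2 w * norm2 w <= (Lip N2 + 1) * norm2 w.
  have E : / ((Lip N2 + 1) * norm2 w) * (norm2 w * norm2 w) = norm2 w / (Lip N2 + 1) by field; lra.
  rewrite E in H.
  have : norm2 w <= Lip N2 + 1.
    apply: (Rmult_le_reg_r (/ (Lip N2 + 1))); first by apply: Rinv_0_lt_compat; lra.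
    rewrite Rinv_r; lra.
  nra.
nra.
Qed.

Lemma ball_closed (s : nat -> vec n) l : (forall k, dual_ball N2 (s k)) -> vconv s l -> dual_ball N2 l.
Proof.
move=> Hs Hc z Hz.
have H1 : Un_cv (fun k => dot z (s k)) (dot z l) by apply: dot_cv => //; exact: vconv_const.
have H2 : Un_cv (fun _ : nat => 1) 1 by exact: cv_const.
exact: (Rle_cv_lim (fun k => Hs k z Hz) H1 H2).
Qed.

Lemma ball_convex a b t : dual_ball N2 a -> dual_ball N2 b -> 0 <= t <= 1 ->
  dual_ball N2 (vadd a (vscale t (vsub b a))).
Proof.
move=> Ha Hb Ht z Hz; rewrite dot_addr dot_scaler dot_subr.
have := Ha z Hz; have := Hb z Hz; nra.
Qed.

Lemma N1_convex v v' t : 0 <= t <= 1 ->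
  N1 (vadd v (vscale t (vsub v' v))) <= (1 - t) * N1 v + t * N1 v'.
Proof.
move=> Ht.
have -> : vadd v (vscale t (vsub v' v)) = vadd (vscale (1 - t) v) (vscale t v').
  by apply: functional_extensionality => i; rewrite /vadd /vscale /vsub; ring.
apply: (Rle_trans _ _ _ (N_tri hN1 _ _)); rewrite !(N_scale hN1) !Rabs_pos_eq; lra.
Qed.

End Main.

Lemma limit0 A B : (forall t, 0 < t <= 1 -> A <= t * B) -> A <= 0.
Proof.
move=> H; case: (Rle_dec A 0) => // HA; have HA' : 0 < A by lra.
set D := Rabs B + A.
have HD : 0 < D by have := Rabs_pos B; rewrite /D; lra.
set t := A / (2 * D).
have Ht : t * (2 * D) = A by rewrite /t; field; lra.
have Ht0 : 0 < t by rewrite /t; apply: Rdiv_lt_0_compat; lra.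
have Ht1 : t <= 1.
  have : A <= D by have := Rabs_pos B; rewrite /D; lra.
  nra.
have H1 := H t (conj Ht0 Ht1).
have H2 : t * B <= t * Rabs B by apply: Rmult_le_compat_l; [lra | exact: Rle_abs].
have H3 : t * Rabs B <= t * D by apply: Rmult_le_compat_l; [lra | rewrite /D; lra].
nra.
Qed.

Lemma div_t t X Y : 0 < t -> 0 <= t * X + t * t * Y -> 0 <= X + t * Y.
Proof.
move=> Ht H; apply: (Rmult_le_reg_l t) => //.
rewrite Rmult_0_r Rmult_plus_distr_l -Rmult_assoc; lra.
Qed.

Lemma dot_sub_scale n (a d : vec n) t :
  dot (vsub a (vscale t d)) (vsub a (vscale t d)) = dot a a - 2 * t * dot a d + t * t * dot d d.
Proof. rewrite !dot_subl !dot_subr !dot_scalel !dot_scaler (dot_sym d a); ring. Qed.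

Lemma dot_add_scale n (a d : vec n) t :
  dot (vadd a (vscale t d)) (vadd a (vscale t d)) = dot a a + 2 * t * dot a d + t * t * dot d d.
Proof. rewrite !dot_addl !dot_addr !dot_scalel !dot_scaler (dot_sym d a); ring. Qed.

Section P.
Variables (n : nat) (N1 N2 : vec n -> R) (hN1 : is_norm N1) (hN2 : is_norm N2) (x : vec n).

Lemma P_opt lam mu v w : 0 < lam -> 0 < mu -> P_minimizer N1 N2 lam mu x v w ->
  (forall w', dual_ball N2 w' -> dot (vscale (/ mu) (vsub (vsub x v) w)) (vsub w' w) <= 0) /\
  (forall v', N1 v + dot (vsub (vscale (/ mu) (vsub (vsub x v) w)) (vscale lam v)) (vsub v' v) <= N1 v').
Proof.
move=> Hl Hm [Hw Hmin].
set a := vsub (vsub x v) w.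
set im := / mu.
have Him : 0 < im by apply: Rinv_0_lt_compat.
have E2 : / (2 * mu) = / 2 * im by rewrite Rinv_mult.
split.
- move=> w' Hw'; set d := vsub w' w.
  rewrite dot_scalel.
  suff : dot a d <= 0 by move=> H; have := Rmult_le_compat_l _ _ _ (Rlt_le _ _ Him) H; lra.
  apply: (limit0 _ (dot d d / 2)) => t Ht.
  have Hwt : dual_ball N2 (vadd w (vscale t d)) by apply: ball_convex => //; lra.
  have H := Hmin v _ Hwt.
  rewrite /P_obj !norm2_sq E2 in H.
  have E : vsub (vsub x v) (vadd w (vscale t d)) = vsub a (vscale t d).
    by apply: functional_extensionality => i; rewrite /a /d /vsub /vadd /vscale; ring.
  rewrite E dot_sub_scale in H.
  have H0 : 0 <= im * (t * (- dot a d) + t * t * (dot d d / 2)).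
    rewrite -/a in H; ring_simplify; ring_simplify in H; lra.
  have H' : 0 <= t * (- dot a d) + t * t * (dot d d / 2).
    apply: (Rmult_le_reg_l im) => //; lra.
  have := div_t _ _ _ (proj1 Ht) H'; lra.
- move=> v'; set d := vsub v' v.
  rewrite dot_subl dot_scalel dot_scalel.
  suff : - (N1 v' - N1 v + lam * dot v d - im * dot a d) <= 0 by lra.
  apply: (limit0 _ (lam / 2 * dot d d + im / 2 * dot d d)) => t Ht.
  have H := Hmin (vadd v (vscale t d)) _ Hw.
  have Hc := N1_convex _ _ hN1 v v' t ltac:(lra).
  rewrite /P_obj !norm2_sq E2 in H.
  have E : vsub (vsub x (vadd v (vscale t d))) w = vsub a (vscale t d).
    by apply: functional_extensionality => i; rewrite /a /d /vsub /vadd /vscale; ring.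
  rewrite E dot_sub_scale dot_add_scale in H.
  have H' : 0 <= t * (N1 v' - N1 v + lam * dot v d - im * dot a d)
                 + t * t * (lam / 2 * dot d d + im / 2 * dot d d).
    rewrite -/a in H; rewrite -/d in Hc; ring_simplify; ring_simplify in H; ring_simplify in Hc; lra.
  have := div_t _ _ _ (proj1 Ht) H'; lra.
Qed.

Lemma P_obj_ge0 lam mu y v w : 0 < lam -> 0 < mu -> 0 <= P_obj N1 lam mu y v w.
Proof.
move=> Hl Hm; rewrite /P_obj.
have := N_ge0 hN1 v; have := pow2_ge_0 (norm2 v); have := pow2_ge_0 (norm2 (vsub (vsub y v) w)).
have : 0 < / (2 * mu) by apply: Rinv_0_lt_compat; lra.
move=> H1 H2 H3 H4.
have : 0 <= lam / 2 * norm2 v ^ 2 by apply: Rmult_le_pos; lra.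
have : 0 <= / (2 * mu) * norm2 (vsub (vsub y v) w) ^ 2 by apply: Rmult_le_pos; lra.
lra.
Qed.

Lemma Slm_set_glb lam mu y : 0 < lam -> 0 < mu ->
  exists s, is_glb (fun t => exists v w, dual_ball N2 w /\ t = P_obj N1 lam mu y v w) s.
Proof.
move=> Hl Hm; apply: (glb_exists _ (P_obj N1 lam mu y vzero vzero)).
  exists vzero, vzero; split => //; exact: dual_ball0.
move=> t [v [w [_ ->]]]; exact: P_obj_ge0.
Qed.

Lemma Slm_le lam mu y v w : 0 < lam -> 0 < mu -> dual_ball N2 w ->
  S_lm N1 N2 lam mu y <= P_obj N1 lam mu y v w.
Proof.
move=> Hl Hm Hw; have [H1 _] := inf_of_spec _ (Slm_set_glb lam mu y Hl Hm); apply: H1; by exists v, w.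
Qed.

Lemma Slm_eq lam mu v w : P_minimizer N1 N2 lam mu x v w ->
  S_lm N1 N2 lam mu x = P_obj N1 lam mu x v w.
Proof.
move=> [Hw Hmin]; apply: inf_of_min; first by exists v, w.
move=> t' [v' [w' [Hw' ->]]]; exact: Hmin.
Qed.

Lemma P_obj_shift lam mu h v w : 0 < mu ->
  P_obj N1 lam mu (vadd x h) v w = P_obj N1 lam mu x v w
     + dot (vscale (/ mu) (vsub (vsub x v) w)) h + / (2 * mu) * dot h h.
Proof.
move=> Hm; rewrite /P_obj !norm2_sq.
have -> : vsub (vsub (vadd x h) v) w = vadd (vsub (vsub x v) w) (vscale 1 h).
  by apply: functional_extensionality => i; rewrite /vsub /vadd /vscale; ring.
rewrite dot_add_scale dot_scalel Rinv_mult; field; lra.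
Qed.

Lemma grad_id lam mu v w p : 0 < lam -> 0 < mu -> P_minimizer N1 N2 lam mu x v w ->
  is_gradient (S_lm N1 N2 lam mu) x p -> p = vscale (/ mu) (vsub (vsub x v) w).
Proof.
move=> Hl Hm Hmin Hg.
set q := vscale (/ mu) (vsub (vsub x v) w).
set d := vsub p q.
suff Hd : dot d d = 0.
  have := dot0_vzero _ Hd => H; apply: functional_extensionality => i.
  have := f_equal (fun f => f i) H; rewrite /d /vsub /vzero /=; lra.
case: (Req_dec (dot d d) 0) => // HD.
set nd := norm2 d.
have Hnd : 0 < nd.
  case: (Rle_lt_or_eq_dec 0 nd (norm2_ge0 d)) => // H0.
  exfalso; apply: HD; apply: norm2_eq0; by rewrite -/nd -H0.
have HD' : dot d d = nd * nd by rewrite /nd norm2_sq'.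
have [delta [Hdel Hgd]] := Hg (nd / 2) ltac:(lra).
set t := Rmin (delta / (2 * nd)) (mu / 2).
have Ht0 : 0 < t.
  apply: Rmin_pos; last lra; apply: Rdiv_lt_0_compat; lra.
have Ht1 : t <= delta / (2 * nd) by apply: Rmin_l.
have Ht2 : t <= mu / 2 by apply: Rmin_r.
set h := vscale t d.
have Hnh : norm2 h = t * nd by rewrite /h norm2_scale Rabs_pos_eq //; lra.
have Hh : norm2 h < delta.
  rewrite Hnh.
  have : t * nd <= delta / (2 * nd) * nd by apply: Rmult_le_compat_r; lra.
  have -> : delta / (2 * nd) * nd = delta / 2 by field; lra.
  lra.
have H1 := Hgd h Hh.
have H2 := Slm_le lam mu (vadd x h) v w Hl Hm (proj1 Hmin).
rewrite P_obj_shift // -(Slm_eq _ _ _ _ Hmin) -/q in H2.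
have E1 : dot p h - dot q h = t * (nd * nd) by rewrite -dot_subl -/d /h dot_scaler HD'.
have E2 : dot h h = t * t * (nd * nd) by rewrite /h dot_scalel dot_scaler HD'; ring.
rewrite E2 in H2.
have H3 := Rle_abs (- (S_lm N1 N2 lam mu (vadd x h) - S_lm N1 N2 lam mu x - dot p h)).
rewrite Rabs_Ropp in H3; rewrite Hnh in H1.
have Hk : t * (nd * nd) <= nd / 2 * (t * nd) + / (2 * mu) * (t * t * (nd * nd)) by lra.
have Him : / (2 * mu) * t <= / 4.
  apply: (Rmult_le_reg_l (2 * mu)); first lra.
  rewrite -Rmult_assoc Rinv_r; last lra.
  have -> : 2 * mu * / 4 = mu / 2 by field.
  lra.
have Hpos : 0 < t * (nd * nd) by apply: Rmult_lt_0_compat => //; nra.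
have : / (2 * mu) * (t * t * (nd * nd)) <= / 4 * (t * (nd * nd)).
  have -> : / (2 * mu) * (t * t * (nd * nd)) = (/ (2 * mu) * t) * (t * (nd * nd)) by ring.
  apply: Rmult_le_compat_r; lra.
nra.
Qed.

End P.

Lemma vsub_eq n (a b : vec n) : vsub a b = vadd a (vscale (-1) b).
Proof. by apply: functional_extensionality => i; rewrite /vsub /vadd /vscale; ring. Qed.

Section L.
Variables (n : nat) (N1 N2 : vec n -> R) (hN1 : is_norm N1) (hN2 : is_norm N2) (x : vec n) (c : R).

Lemma Lim (lam mu : nat -> R) (v w u p : nat -> vec n) ubar pbar :
  (forall k, 0 < lam k) -> (forall k, 0 < mu k) -> Un_cv lam 0 -> Un_cv mu 0 ->
  Un_cv (fun k => lam k / mu k) c ->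
  (forall k, dual_ball N2 (w k)) ->
  (forall k w', dual_ball N2 w' -> dot (p k) (vsub w' (w k)) <= 0) ->
  (forall k v', N1 (v k) + dot (vsub (p k) (vscale (lam k) (v k))) (vsub v' (v k)) <= N1 v') ->
  (forall k, u k = vsub x (w k)) ->
  (forall k, v k = vsub (u k) (vscale (mu k) (p k))) ->
  vconv u ubar -> vconv p pbar ->
  in_U N1 N2 x ubar /\ in_subdiff_S N1 N2 x pbar /\
  (forall uu pp, in_U N1 N2 x uu -> in_subdiff_S N1 N2 x pp ->
      c * dot ubar (vsub ubar uu) <= dot (vsub pp pbar) pbar).
Proof.
move=> Hl Hm Hl0 Hm0 Hc Hw H1 H2 Hu Hv Huc Hpc.
have Hvc : vconv v ubar.
  have -> : v = (fun k => vsub (u k) (vscale (mu k) (p k))) by apply: functional_extensionality.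
  have -> : ubar = vsub ubar (vscale 0 pbar).
    by apply: functional_extensionality => i; rewrite /vsub /vscale; ring.
  apply: vconv_sub' => //; exact: vconv_scale.
have Hwc : vconv w (vsub x ubar).
  have -> : w = (fun k => vsub x (u k)).
    apply: functional_extensionality => k; rewrite Hu.
    by apply: functional_extensionality => i; rewrite /vsub; ring.
  apply: vconv_sub' => //; exact: vconv_const.
have KS : forall k y u', dual_ball N2 (vsub y u') ->
    N1 (v k) + dot (p k) (vsub y x) - lam k * dot (v k) (vsub u' (v k)) <= N1 u'.
  move=> k y u' Hyu.
  have A1 := H2 k u'; have A2 := H1 k _ Hyu.
  rewrite dot_subl dot_scalel in A1.
  have E : vsub u' (v k) = vadd (vsub y x) (vadd (vscale (mu k) (p k)) (vscale (-1) (vsub (vsub y u') (w k)))).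
    rewrite Hv Hu; apply: functional_extensionality => i; rewrite /vsub /vadd /vscale; ring.
  have Epp : dot (p k) (vsub u' (v k)) = dot (p k) (vsub y x) + mu k * dot (p k) (p k)
        - dot (p k) (vsub (vsub y u') (w k)).
    rewrite {1}E; do 4 rewrite ?vsub_eq ?dot_addl ?dot_addr ?dot_scalel ?dot_scaler; ring.
  have := dot_ge0 (p k); have := Hm k; move=> Hmk Hpp.
  have : 0 <= mu k * dot (p k) (p k) by apply: Rmult_le_pos; lra.
  lra.
have KU : forall k u', dual_ball N2 (vsub x u') ->
    N1 (v k) - lam k * dot (v k) (vsub u' (v k)) <= N1 u'.
  move=> k u' Hu'.
  have := KS k x u' Hu'.
  have -> : vsub x x = vzero by apply: functional_extensionality => i; rewrite /vsub /vzero; ring.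
  rewrite dot_zeror; lra.
have HUb : in_U N1 N2 x ubar.
  split; first exact: (ball_closed _ _ _ _ Hw Hwc).
  move=> u' Hu'.
  have Hle : forall k, N1 ubar <= N1 u' + lam k * dot (v k) (vsub u' (v k)) + Lip N1 * norm2 (vsub (v k) ubar).
    move=> k; have := KU k u' Hu'; have := N_lip hN1 (v k) ubar.
    have := Rle_abs (- (N1 (v k) - N1 ubar)); rewrite Rabs_Ropp; lra.
  have Hcv : Un_cv (fun k => N1 u' + lam k * dot (v k) (vsub u' (v k)) + Lip N1 * norm2 (vsub (v k) ubar))
               (N1 u' + 0 * dot ubar (vsub u' ubar) + Lip N1 * 0).
    apply: CV_plus; [apply: CV_plus; [exact: cv_const | apply: CV_mult => //] | apply: CV_mult; [exact: cv_const|]].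
    + apply: dot_cv => //; apply: vconv_sub' => //; exact: vconv_const.
    + by apply/vconv_iff.
  have := Rle_cv_lim Hle (cv_const _) Hcv; lra.
have HS : in_subdiff_S N1 N2 x pbar.
  move=> y; rewrite (S_eq _ _ _ hN1 _ _ HUb).
  apply: (S_ge _ _ _ hN1) => u' Hu'.
  have Hle : forall k, N1 ubar + dot (p k) (vsub y x) <= N1 u' + lam k * dot (v k) (vsub u' (v k)) + Lip N1 * norm2 (vsub (v k) ubar).
    move=> k; have := KS k y u' Hu'; have := N_lip hN1 (v k) ubar.
    have := Rle_abs (- (N1 (v k) - N1 ubar)); rewrite Rabs_Ropp; lra.
  have Hcv : Un_cv (fun k => N1 u' + lam k * dot (v k) (vsub u' (v k)) + Lip N1 * norm2 (vsub (v k) ubar))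
               (N1 u' + 0 * dot ubar (vsub u' ubar) + Lip N1 * 0).
    apply: CV_plus; [apply: CV_plus; [exact: cv_const | apply: CV_mult => //] | apply: CV_mult; [exact: cv_const|]].
    + apply: dot_cv => //; apply: vconv_sub' => //; exact: vconv_const.
    + by apply/vconv_iff.
  have Hcl : Un_cv (fun k => N1 ubar + dot (p k) (vsub y x)) (N1 ubar + dot pbar (vsub y x)).
    apply: CV_plus; first exact: cv_const.
    apply: dot_cv => //; exact: vconv_const.
  have := Rle_cv_lim Hle Hcl Hcv; lra.
split => //; split => //.
move=> uu pp HU Hpp.
have [Ha Hb] := U_props _ _ _ hN1 _ _ _ HU Hpp.
have Kstar : forall k, lam k / mu k * dot (v k) (vsub (v k) uu) <= dot (vsub pp (p k)) (p k).
  move=> k.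
  have A1 := H2 k uu.
  have A2 := H1 k _ (proj1 HU).
  have A3 := Ha _ (Hw k).
  have A4 := Hb (v k).
  have E1 : vsub (vsub x uu) (w k) = vsub (vadd (v k) (vscale (mu k) (p k))) uu.
    rewrite Hv Hu; apply: functional_extensionality => i; rewrite /vsub /vadd /vscale; ring.
  have E2 : vsub (w k) (vsub x uu) = vsub uu (vadd (v k) (vscale (mu k) (p k))).
    rewrite Hv Hu; apply: functional_extensionality => i; rewrite /vsub /vadd /vscale; ring.
  rewrite E1 in A2; rewrite E2 in A3.
  do 4 rewrite ?vsub_eq ?dot_addl ?dot_addr ?dot_scalel ?dot_scaler in A1 A2 A3 A4.
  rewrite dot_subr dot_subl.
  have Hmk := Hm k.
  have Hkey : lam k * (dot (v k) (v k) - dot (v k) uu) <= mu k * (dot pp (p k) - dot (p k) (p k)).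
    have := dot_sym (v k) uu; have := dot_sym (p k) (v k); have := dot_sym pp (v k);
    have := dot_sym (p k) uu; have := dot_sym pp uu; have := dot_sym pp (p k); nra.
  apply: (Rmult_le_reg_l (mu k)) => //.
  have -> : mu k * (lam k / mu k * (dot (v k) (v k) - dot (v k) uu)) = lam k * (dot (v k) (v k) - dot (v k) uu)
    by field; lra.
  exact: Hkey.
have Hcl : Un_cv (fun k => lam k / mu k * dot (v k) (vsub (v k) uu)) (c * dot ubar (vsub ubar uu)).
  apply: CV_mult => //; apply: dot_cv => //; apply: vconv_sub' => //; exact: vconv_const.
have Hcr : Un_cv (fun k => dot (vsub pp (p k)) (p k)) (dot (vsub pp pbar) pbar).
  apply: dot_cv => //; apply: vconv_sub' => //; exact: vconv_const.
exact: (Rle_cv_lim Kstar Hcl Hcr).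
Qed.

End L.

Lemma subseq_conv n (s : nat -> vec n) L :
  (forall sg, incr sg -> exists tau, incr tau /\ vconv (fun k => s (sg (tau k))) L) -> vconv s L.
Proof.
move=> H; apply: NNPP => Hn.
have [eps [He Hb]] : exists eps, 0 < eps /\ forall N, exists k, (N <= k)%coq_nat /\ eps <= norm2 (vsub (s k) L).
  apply: NNPP => H'; apply: Hn => eps He; apply: NNPP => H3; apply: H'.
  exists eps; split => // N; apply: NNPP => H4; apply: H3.
  exists N => k Hk; apply: Rnot_le_lt => H5; apply: H4.
  exists k; split => //; apply/leP; exact: Hk.
pose f N (_ : nat) := epsilon (inhabits 0%nat) (fun k => (N <= k)%coq_nat /\ eps <= norm2 (vsub (s k) L)).
have Hf : forall N j, (N <= f N j)%coq_nat /\ eps <= norm2 (vsub (s (f N j)) L).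
  move=> N j; exact: (epsilon_spec (inhabits 0%nat) _ (Hb N)).
have Hinc : incr (build f) by move=> k /=; have [H1 _] := Hf (S (build f k)) (S k); lia.
have Hall : forall k, eps <= norm2 (vsub (s (build f k)) L).
  case=> [|k]; [exact: (proj2 (Hf 0%nat 0%nat)) | exact: (proj2 (Hf (S (build f k)) (S k)))].
have [tau [Ht Hc]] := H _ Hinc.
have [K HK] := Hc eps He.
have := HK K (leqnn K); have := Hall (tau K); lra.
Qed.

Lemma var_min n (C : vec n -> Prop) (a : vec n) :
  (forall b, C b -> dot a (vsub a b) <= 0) ->
  (forall b, C b -> norm2 a <= norm2 b) /\ (forall b, C b -> norm2 b <= norm2 a -> b = a).
Proof.
move=> H; split.
- move=> b Hb; have := H b Hb; rewrite dot_subr -norm2_sq' => H1.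
  have := CS' a b; have := norm2_ge0 a; have := norm2_ge0 b; nra.
- move=> b Hb Hba; have := H b Hb; rewrite dot_subr => H1.
  have Hbb : dot b b <= dot a a.
    rewrite -!norm2_sq'; have := norm2_ge0 b; nra.
  have : dot (vsub a b) (vsub a b) = 0.
    have := dot_ge0 (vsub a b); rewrite !dot_subl !dot_subr (dot_sym b a); lra.
  move/dot0_vzero => E; apply: functional_extensionality => i.
  have := f_equal (fun f => f i) E; rewrite /vsub /vzero /=; lra.
Qed.

Theorem proposition5p4 (n : nat) (N1 N2 : vec n -> R)
  (hN1 : is_norm N1) (hN2 : is_norm N2) (x : vec n)
  (lam mu : nat -> R) (c : R)
  (hlam : forall k, 0 < lam k) (hmu : forall k, 0 < mu k)
  (hlam0 : Un_cv lam 0) (hmu0 : Un_cv mu 0)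
  (hc : 0 < c) (hratio : Un_cv (fun k => lam k / mu k) c)
  (v w u p : nat -> vec n)
  (hvw : forall k, P_minimizer N1 N2 (lam k) (mu k) x (v k) (w k))
  (hu : forall k, u k = vsub x (w k))
  (hp : forall k, is_gradient (S_lm N1 N2 (lam k) (mu k)) x (p k)) :
  (exists ustar,
      (in_U N1 N2 x ustar /\ forall u', in_U N1 N2 x u' -> norm2 ustar <= norm2 u') /\
      (forall u', (in_U N1 N2 x u' /\ forall u'', in_U N1 N2 x u'' -> norm2 u' <= norm2 u'')
                  -> u' = ustar) /\
      vconv u ustar) /\
  (exists pstar,
      (in_subdiff_S N1 N2 x pstar /\
         forall p', in_subdiff_S N1 N2 x p' -> norm2 pstar <= norm2 p') /\
      (forall p', (in_subdiff_S N1 N2 x p' /\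
                   forall p'', in_subdiff_S N1 N2 x p'' -> norm2 p' <= norm2 p'')
                  -> p' = pstar) /\
      vconv p pstar).
Proof.
have hpq : forall k, p k = vscale (/ mu k) (vsub (vsub x (v k)) (w k)).
  move=> k; exact: (grad_id _ _ _ hN1 x _ _ _ _ _ (hlam k) (hmu k) (hvw k) (hp k)).
have H1 : forall k w', dual_ball N2 w' -> dot (p k) (vsub w' (w k)) <= 0.
  move=> k w' Hw'; rewrite hpq.
  exact: (proj1 (P_opt _ _ _ hN1 x _ _ _ _ (hlam k) (hmu k) (hvw k)) w' Hw').
have H2 : forall k v', N1 (v k) + dot (vsub (p k) (vscale (lam k) (v k))) (vsub v' (v k)) <= N1 v'.
  move=> k v'; rewrite hpq.
  exact: (proj2 (P_opt _ _ _ hN1 x _ _ _ _ (hlam k) (hmu k) (hvw k)) v').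
have Hw : forall k, dual_ball N2 (w k) by move=> k; exact: (proj1 (hvw k)).
have Hv : forall k, v k = vsub (u k) (vscale (mu k) (p k)).
  move=> k; rewrite hu hpq; apply: functional_extensionality => i; rewrite /vsub /vscale.
  have := hmu k; move=> Hm; field; lra.
have Hub : forall k, norm2 (u k) <= norm2 x + (Lip N2 + 1).
  move=> k; rewrite hu vsub_eq.
  apply: (Rle_trans _ _ _ (norm2_triangle _ _)); rewrite norm2_scale Rabs_Ropp Rabs_R1.
  have := dual_bound _ _ hN2 _ (Hw k); lra.
have [Lam [HLam0 HLam]] := maj_by_pos lam (exist _ 0 hlam0).
set Mp := Lip N1 + Lam * (norm2 x + (Lip N2 + 1)).
have Hpb : forall k, norm2 (p k) <= Mp.
  move=> k.
  set g := vsub (p k) (vscale (lam k) (v k)).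
  have Hg : norm2 g <= Lip N1.
    have A := H2 k (vadd (v k) g).
    have E : vsub (vadd (v k) g) (v k) = g.
      by apply: functional_extensionality => i; rewrite /vsub /vadd; ring.
    rewrite -/g E -norm2_sq' in A.
    have := N_tri hN1 (v k) g; have := N_le_Lip hN1 g; have := Lip_ge0 hN1 (N := N1).
    have := norm2_ge0 g; nra.
  have Hd : 0 < 1 + lam k * mu k by have := hlam k; have := hmu k; nra.
  have E : p k = vscale (/ (1 + lam k * mu k)) (vadd g (vscale (lam k) (u k))).
    apply: functional_extensionality => i; rewrite /g Hv /vsub /vadd /vscale; field; lra.
  rewrite E norm2_scale Rabs_pos_eq; last by apply: Rlt_le; apply: Rinv_0_lt_compat.
  have Hn := norm2_triangle g (vscale (lam k) (u k)).
  rewrite norm2_scale in Hn.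
  have Hl := HLam k; have := Rle_abs (lam k); have := Rabs_pos (lam k).
  have := Hub k; have := norm2_ge0 (u k); have := norm2_ge0 (vadd g (vscale (lam k) (u k))).
  have Hi : / (1 + lam k * mu k) <= 1.
    rewrite -Rinv_1; apply: Rinv_le_contravar; first lra.
    have := hlam k; have := hmu k; nra.
  have Hi0 : 0 < / (1 + lam k * mu k) by apply: Rinv_0_lt_compat.
  rewrite /Mp; move=> G1 G2 G3 G4 G5.
  have : Rabs (lam k) * norm2 (u k) <= Lam * (norm2 x + (Lip N2 + 1)).
    apply: Rmult_le_compat => //; lra.
  nra.
have Hid : incr (fun k => k) by move=> k; lia.
have cluster : forall sg, incr sg -> exists tau ubar pbar, incr tau /\
    vconv (fun k => u (sg (tau k))) ubar /\ vconv (fun k => p (sg (tau k))) pbar /\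
    in_U N1 N2 x ubar /\ in_subdiff_S N1 N2 x pbar /\
    (forall uu pp, in_U N1 N2 x uu -> in_subdiff_S N1 N2 x pp ->
       c * dot ubar (vsub ubar uu) <= dot (vsub pp pbar) pbar).
  move=> sg Hsg.
  have [phi [ubar [Hphi Hu1]]] := BWn _ (fun k => u (sg k)) _ (fun k => Hub (sg k)).
  have [psi [pbar [Hpsi Hp1]]] := BWn _ (fun k => p (sg (phi k))) _ (fun k => Hpb (sg (phi k))).
  have Hpp : incr (fun k => phi (psi k)) := incr_comp _ _ Hphi Hpsi.
  have Hk : incr (fun k => sg (phi (psi k))) := incr_comp _ _ Hsg Hpp.
  have Hu2 : vconv (fun k => u (sg (phi (psi k)))) ubar.
    exact: (vconv_sub _ (fun k => u (sg (phi k))) ubar psi Hpsi Hu1).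
  have [HU [HS HV]] := Lim _ _ _ hN1 x c (fun k => lam (sg (phi (psi k)))) (fun k => mu (sg (phi (psi k))))
     (fun k => v (sg (phi (psi k)))) (fun k => w (sg (phi (psi k)))) (fun k => u (sg (phi (psi k))))
     (fun k => p (sg (phi (psi k)))) ubar pbar (fun k => hlam _) (fun k => hmu _)
     (Un_cv_sub _ _ _ Hk hlam0) (Un_cv_sub _ _ _ Hk hmu0) (Un_cv_sub (fun k => lam k / mu k) _ _ Hk hratio)
     (fun k => Hw _) (fun k => H1 _) (fun k => H2 _) (fun k => hu _) (fun k => Hv _) Hu2 Hp1.
  exists (fun k => phi (psi k)), ubar, pbar.
  by do 5 (split => //).
have Vu : forall ub pb, in_subdiff_S N1 N2 x pb ->
    (forall uu pp, in_U N1 N2 x uu -> in_subdiff_S N1 N2 x pp -> c * dot ub (vsub ub uu) <= dot (vsub pp pb) pb) ->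
    forall uu, in_U N1 N2 x uu -> dot ub (vsub ub uu) <= 0.
  move=> ub pb HS HV uu HU; have := HV uu pb HU HS.
  have -> : vsub pb pb = vzero by apply: functional_extensionality => i; rewrite /vsub /vzero; ring.
  rewrite dot_zerol => H.
  apply: (Rmult_le_reg_l c) => //; lra.
have Vp : forall ub pb, in_U N1 N2 x ub ->
    (forall uu pp, in_U N1 N2 x uu -> in_subdiff_S N1 N2 x pp -> c * dot ub (vsub ub uu) <= dot (vsub pp pb) pb) ->
    forall pp, in_subdiff_S N1 N2 x pp -> dot pb (vsub pb pp) <= 0.
  move=> ub pb HU HV pp HS; have := HV ub pp HU HS.
  have -> : vsub ub ub = vzero by apply: functional_extensionality => i; rewrite /vsub /vzero; ring.
  rewrite dot_zeror dot_subl dot_subr (dot_sym pp pb); lra.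
have [tau0 [ustar [pstar [Ht0 [Hu0 [Hp0 [HU0 [HS0 HV0]]]]]]]] := cluster _ Hid.
have [Umin Uuniq] := var_min _ (in_U N1 N2 x) ustar (Vu _ _ HS0 HV0).
have [Pmin Puniq] := var_min _ (in_subdiff_S N1 N2 x) pstar (Vp _ _ HU0 HV0).
split.
- exists ustar; split; first by split.
  split; first by move=> u' [Hu' Hm']; apply: Uuniq Hu' (Hm' _ HU0).
  apply: subseq_conv => sg Hsg.
  have [tau [ub [pb [Ht [Hu1 [_ [HU1 [HS1 HV1]]]]]]]] := cluster sg Hsg.
  exists tau; split => //.
  have Hm1 := proj1 (var_min _ _ ub (Vu ub pb HS1 HV1)).
  have E : ub = ustar := Uuniq ub HU1 (Hm1 ustar HU0).
  by rewrite -E.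
- exists pstar; split; first by split.
  split; first by move=> p' [Hp' Hm']; apply: Puniq Hp' (Hm' _ HS0).
  apply: subseq_conv => sg Hsg.
  have [tau [ub [pb [Ht [_ [Hp1 [HU1 [HS1 HV1]]]]]]]] := cluster sg Hsg.
  exists tau; split => //.
  have Hm1 := proj1 (var_min _ _ pb (Vp ub pb HU1 HV1)).
  have E : pb = pstar := Puniq pb HS1 (Hm1 pstar HS0).
  by rewrite -E.
Qed.
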